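(* Let $k$ be a difference field of characteristic $0$, $R=k\{y_1,\ldots,y_n\}$, and $I$ a radical well-mixed $\sigma$-ideal of $R$. Suppose $\mathbf{u}_1,\mathbf{u}_2\in\mathbb{N}[x]^n$ satisfy $\mathbf{y}^{\mathbf{u}_1+\mathbf{u}_2}\in I$. Then $I=\langle I,\mathbf{y}^{\mathbf{u}_1}\rangle_r\cap\langle I,\mathbf{y}^{\mathbf{u}_2}\rangle_r$.
   Context: A difference field is a field $k$ with a ring endomorphism $\sigma$; $R=k\{y_1,\ldots,y_n\}$ is the polynomial ring over $k$ in the variables $\sigma^j(y_i)$, with $\sigma$ extended naturally. For $p=\sum_ic_ix^i\in\mathbb{N}[x]$ and $a\in R$, $a^p=\prod_i(\sigma^i(a))^{c_i}$; $\mathbf{y}^{\mathbf{u}}=y_1^{u_1}\cdots y_n^{u_n}$. A $\sigma$-ideal is an ideal stable under $\sigma$; well-mixed if $ab\in I\Rightarrow a\sigma(b)\in I$. $\langle F\rangle_r$ is the smallest radical well-mixed $\sigma$-ideal containing $F$; $\langle I,f\rangle_r$ means $\langle I\cup\{f\}\rangle_r$. *)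

(* Defs.v *)
From HB Require Import structures.
From mathcomp Require Import all_boot all_algebra.
From mathcomp Require Import finmap.
From mathcomp.multinomials Require Import monalg.

Set Implicit Arguments.
Unset Strict Implicit.
Unset Printing Implicit Defensive.

Import GRing.Theory.
Local Open Scope ring_scope.

(* The difference polynomial ring k{y_1,...,y_n}: the commutative polynomial
   ring over k in the (infinitely many) variables y_(i,j) = sigma^j (y_i),
   i < n, j in nat. *)
Definition dpoly (k : fieldType) (n : nat) :=
  {malg k[cmonom ('I_n * nat)%type]}.

Definition dvar (k : fieldType) (n : nat) (i : 'I_n) (j : nat) : dpoly k n :=
  mkmalgU (ucm (i, j)) 1.

Definition dshift_mon (k : fieldType) (n : nat)
    (m : cmonom ('I_n * nat)%type) : dpoly k n :=
  \prod_(p <- finsupp m) dvar k p.1 p.2.+1 ^+ m p.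

Definition dsigma (k : fieldType) (sk : {rmorphism k -> k}) (n : nat)
    (a : dpoly k n) : dpoly k n :=
  mmap (fun c : k => malgC (sk c) : dpoly k n) (@dshift_mon k n) a.

(* a^p for p = sum_i c_i x^i in N[x]:  prod_i (sigma^i a)^(c_i) *)
Definition dpow (k : fieldType) (sk : {rmorphism k -> k}) (n : nat)
    (a : dpoly k n) (p : {poly nat}) : dpoly k n :=
  \prod_(i < size p) (iter i (@dsigma k sk n) a) ^+ (nth 0%N (polyseq p) i).

Definition ymon (k : fieldType) (sk : {rmorphism k -> k}) (n : nat)
    (u : 'I_n -> {poly nat}) : dpoly k n :=
  \prod_(i < n) dpow sk (dvar k i 0) (u i).

Definition is_ideal (R : comRingType) (I : R -> Prop) : Prop :=
  [/\ I 0, (forall a b, I a -> I b -> I (a + b)) &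
      (forall r a, I a -> I (r * a))].

Definition is_sigma_ideal (k : fieldType) (sk : {rmorphism k -> k}) (n : nat)
    (I : dpoly k n -> Prop) : Prop :=
  is_ideal I /\ (forall a, I a -> I (dsigma sk a)).

Definition is_well_mixed (k : fieldType) (sk : {rmorphism k -> k}) (n : nat)
    (I : dpoly k n -> Prop) : Prop :=
  forall a b, I (a * b) -> I (a * dsigma sk b).

Definition is_radical (R : comRingType) (I : R -> Prop) : Prop :=
  forall (a : R) (m : nat), I (a ^+ m.+1) -> I a.

Definition is_rwm_sigma_ideal (k : fieldType) (sk : {rmorphism k -> k})
    (n : nat) (I : dpoly k n -> Prop) : Prop :=
  [/\ is_sigma_ideal sk I, is_well_mixed sk I & is_radical I].

(* <F>_r : the smallest radical well-mixed sigma-ideal containing F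
   (intersection of all such ideals) *)
Definition rwm_closure (k : fieldType) (sk : {rmorphism k -> k}) (n : nat)
    (F : dpoly k n -> Prop) : dpoly k n -> Prop :=
  fun a => forall J : dpoly k n -> Prop,
    is_rwm_sigma_ideal sk J -> (forall b, F b -> J b) -> J a.

Definition rwm_closure_add (k : fieldType) (sk : {rmorphism k -> k})
    (n : nat) (I : dpoly k n -> Prop) (f : dpoly k n) : dpoly k n -> Prop :=
  rwm_closure sk (fun b => I b \/ b = f).

(* Main.v *)
Require Import Defs.
From HB Require Import structures.
From mathcomp Require Import all_boot all_algebra.
From mathcomp Require Import finmap.
From mathcomp.multinomials Require Import monalg.
Import GRing.Theory.
Local Open Scope ring_scope.

Lemma dpow_widen (k : fieldType) (sk : {rmorphism k -> k}) (n : nat)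
    (a : dpoly k n) (p : {poly nat}) (N : nat) :
  (size p <= N)%N ->
  dpow sk a p = \prod_(i < N) (iter i (@dsigma k sk n) a) ^+ (nth 0%N (polyseq p) i).
Proof.
move=> hN; rewrite /dpow (big_ord_widen N (fun i => (iter i (@dsigma k sk n) a) ^+ (nth 0%N (polyseq p) i)) hN).
rewrite big_mkcond /=; apply: eq_bigr => i _.
by case: ifP => // /negbT; rewrite -leqNgt => h; rewrite nth_default // expr0.
Qed.

Lemma coefD_nat (p q : {poly nat}) (i : nat) :
  nth 0%N (polyseq (p + q)) i = (nth 0%N (polyseq p) i + nth 0%N (polyseq q) i)%N.
Proof. exact: (coefD p q i). Qed.

Lemma dpowD (k : fieldType) (sk : {rmorphism k -> k}) (n : nat)
    (a : dpoly k n) (p q : {poly nat}) :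
  dpow sk a (p + q) = dpow sk a p * dpow sk a q.
Proof.
set N := maxn (size p) (size q).
have hp : (size p <= N)%N by rewrite leq_maxl.
have hq : (size q <= N)%N by rewrite leq_maxr.
have hpq : (size (p + q)%R <= N)%N by exact: size_polyD.
rewrite (@dpow_widen k sk n a _ _ hp) (@dpow_widen k sk n a _ _ hq) (@dpow_widen k sk n a _ _ hpq) -big_split.
apply: eq_bigr => i _.
rewrite coefD_nat.
by rewrite exprD.
Qed.

Lemma ymonD (k : fieldType) (sk : {rmorphism k -> k}) (n : nat)
    (u1 u2 : 'I_n -> {poly nat}) :
  ymon sk (fun i => u1 i + u2 i) = ymon sk u1 * ymon sk u2.
Proof. by rewrite /ymon -big_split /=; apply: eq_bigr => i _; rewrite dpowD. Qed.

Section Gen.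
Variables (k : fieldType) (sk : {rmorphism k -> k}) (n : nat).
Notation R := (dpoly k n).
Lemma L_rwm (I : R -> Prop) (HI : is_rwm_sigma_ideal sk I) (b : R) :
  is_rwm_sigma_ideal sk (fun c => I (b * c)).
Proof.
case: HI => [[[I0 ID IM] Is] Iw Ir]; split; [split; [split|]| |].
- rewrite /= mulr0. exact I0.
- move=> x y hx hy. rewrite mulrDr. exact: ID hx hy.
- move=> r x hx. rewrite mulrCA. exact: IM hx.
- move=> x hx. exact: Iw hx.
- move=> x y h. rewrite mulrA. apply: Iw. rewrite -mulrA. exact h.
- move=> x m h; apply: (Ir _ m). rewrite exprMn exprS.
  have -> : b * b ^+ m * x ^+ m.+1 = b ^+ m * (b * x ^+ m.+1).
    rewrite -mulrA mulrCA. reflexivity.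
  exact: IM h.
Qed.

Lemma inter_rwm (T : R -> Prop) (F : R -> R -> Prop)
    (HF : forall c, T c -> is_rwm_sigma_ideal sk (F c)) :
  is_rwm_sigma_ideal sk (fun b => forall c, T c -> F c b).
Proof.
split; [split; [split|]| |].
- move=> c hc. case: (HF c hc) => [[[Z _ _] _] _ _]. exact Z.
- move=> x y hx hy c hc. case: (HF c hc) => [[[_ D _] _] _ _]. exact: D (hx c hc) (hy c hc).
- move=> r x hx c hc. case: (HF c hc) => [[[_ _ M] _] _ _]. exact: M (hx c hc).
- move=> x hx c hc. case: (HF c hc) => [[_ S] _ _]. exact: S (hx c hc).
- move=> x y hx c hc. case: (HF c hc) => [_ W _]. exact: W (hx c hc).
- move=> x m hx c hc. case: (HF c hc) => [_ _ Rd]. exact: Rd x m (hx c hc).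
Qed.

Lemma main_gen (I : R -> Prop) (HI : is_rwm_sigma_ideal sk I) (f g : R) :
  I (f * g) -> forall a, I a <->
    (rwm_closure_add sk I f a /\ rwm_closure_add sk I g a).
Proof.
move=> Hfg a; have HI' := HI; case: HI' => [[[I0 ID IM] Is] Iw Ir].
split.
  move=> ha; split => J _ HJ; apply: HJ; left; exact ha.
case=> [ha1 ha2].
pose K := fun b => forall c, rwm_closure_add sk I g c -> I (c * b).
have HK : is_rwm_sigma_ideal sk K.
  apply: inter_rwm => c _; exact: L_rwm.
have HKa : K a.
  apply: ha1; first exact HK.
  move=> b [hb|->] c hc.
    exact: IM hb.
  rewrite mulrC; apply: (hc (fun c => I (f * c))); first exact: L_rwm.
  move=> b' [hb'|->]; first exact: IM hb'.
  exact Hfg.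
apply: (Ir a 1); rewrite expr2. exact: HKa a ha2.
Qed.
End Gen.

Theorem lemma5p3 (k : fieldType) (sk : {rmorphism k -> k}) (n : nat)
    (char0 : [pchar k] =i pred0)
    (I : dpoly k n -> Prop) (HI : is_rwm_sigma_ideal sk I)
    (u1 u2 : 'I_n -> {poly nat})
    (Hu : I (ymon sk (fun i => u1 i + u2 i))) :
  forall a : dpoly k n,
    I a <-> (rwm_closure_add sk I (ymon sk u1) a /\
             rwm_closure_add sk I (ymon sk u2) a).
Proof. apply: main_gen; first exact HI. rewrite -ymonD. exact Hu. Qed.
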